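(* Let $0<w_1<w_2<\dots<w_n$ be integers with $\sum_{i=1}^n w_i<2^n-1$, such that $w([i])\ge 2^i-1$ for all $i\in[n-1]$. Let $\Delta\le 2^n/(3n^2)$ satisfy $d\le\Delta$. Then $w_i\le 2^{i-1}+\Delta$ for all $i\in[n]$.
   Context: Write $[i]=\{1,\dots,i\}$ and $w(S)=\sum_{j\in S}w_j$ for $S\subseteq[n]$. The frequency is $f_t=\#\{S\subseteq[n]:w(S)=t\}$. The parameter is $d=\sum_{0\le t<2^n}\max\{0,f_t-1\}$; under $\sum_i w_i<2^n-1$ this equals $\#\{0\le t<2^n:f_t=0\}$. *)

(* Defs.v *)
From mathcomp Require Import all_boot all_order all_algebra.
Set Implicit Arguments. Unset Strict Implicit. Unset Printing Implicit Defensive.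

(* Weights w_1..w_n are encoded as w : nat -> nat, with w_i = w i (i = 1..n).
   A subset S of [n] is a set of ordinals 'I_n, the element i : 'I_n standing
   for the index i.+1. *)

Definition wsum (n : nat) (w : nat -> nat) (S : {set 'I_n}) : nat :=
  \sum_(j in S) w j.+1.

Definition freq (n : nat) (w : nat -> nat) (t : nat) : nat :=
  #|[set S : {set 'I_n} | wsum w S == t]|.

(* d = sum_{0 <= t < 2^n} max(0, f_t - 1) *)
Definition dpar (n : nat) (w : nat -> nat) : nat :=
  \sum_(0 <= t < 2 ^ n) (freq n w t - 1).

(* Main.v *)
Require Import Defs.
From mathcomp Require Import all_boot all_order all_algebra.
From mathcomp Require Import zify.
Import Order.TTheory GRing.Theory Num.Theory.

Lemma sum_eqn_nat (x m : nat) : (\sum_(0 <= t < m) (x == t) = (x < m))%N.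
Proof.
elim: m => [|m IH]; first by rewrite big_nil.
rewrite big_nat_recr //= IH ltnS.
case: (ltngtP x m) => h //=.

Qed.

Lemma sum_sub_all {n} (F : 'I_n -> nat) (S : {set 'I_n}) :
  (\sum_(j in S) F j <= \sum_j F j)%N.
Proof.
rewrite [X in (X <= _)%N]big_mkcond /=; apply: leq_sum => j _.
by case: (j \in S).
Qed.

Theorem lemma3p3 (R : realFieldType) (n : nat) (w : nat -> nat) (Delta : R) :
  (forall i, 1 <= i <= n -> 0 < w i)%N ->
  (forall i, 1 <= i < n -> w i < w i.+1)%N ->
  (\sum_(1 <= i < n.+1) w i < 2 ^ n - 1)%N ->
  (forall i, 1 <= i <= n.-1 -> 2 ^ i - 1 <= \sum_(1 <= j < i.+1) w j)%N ->
  (Delta <= (2 ^ n)%:R / (3 * n ^ 2)%:R)%R ->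
  ((dpar n w)%:R <= Delta)%R ->
  forall i, (1 <= i <= n)%N -> ((w i)%:R <= (2 ^ i.-1)%:R + Delta)%R.
Proof.
move=> _ Hinc Htot _ _ Hd i /andP [Hi1 Hin].
have mono : forall k a, (1 <= a)%N -> (a + k <= n)%N -> (w a <= w (a + k))%N.
  elim=> [|k IH] a Ha Hak; first by rewrite addn0.
  apply: leq_trans (IH a Ha _) _; first by rewrite (leq_trans _ Hak) // leq_add2l.
  rewrite addnS; apply: ltnW; apply: Hinc.
  by rewrite (leq_trans Ha (leq_addr _ _)) /= -addnS.
have tot : (\sum_(j < n) w j.+1 = \sum_(1 <= k < n.+1) w k)%N.
  by rewrite big_add1 /= big_mkord.
have wsum_lt : forall S : {set 'I_n}, (wsum w S < 2 ^ n)%N.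
  move=> S; rewrite /wsum; apply: leq_ltn_trans (sum_sub_all _ S) _.
  by rewrite tot (leq_trans Htot) // leq_subr.
have wi_lt : (w i < 2 ^ n)%N.
  have Hj : (i.-1 < n)%N by rewrite prednK.
  apply: leq_ltn_trans (wsum_lt [set: 'I_n]).
  rewrite /wsum (bigD1 (Ordinal Hj)) ?inE //= prednK //.
  exact: leq_addr.
have Hsumf : (\sum_(0 <= t < 2 ^ n) freq n w t = 2 ^ n)%N.
  transitivity (\sum_(0 <= t < 2 ^ n) \sum_(S : {set 'I_n}) (wsum w S == t))%N.
    apply: eq_big => // t _; rewrite /freq -sum1_card big_mkcond /=.
    by apply: eq_big => // S _; rewrite inE.
  rewrite exchange_big /=.
  transitivity (\sum_(S : {set 'I_n}) 1)%N.
    by apply: eq_big => // S _; rewrite sum_eqn_nat wsum_lt.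
  by rewrite sum1_card -cardsT -powersetT card_powerset cardsT card_ord.
have key : (2 ^ n <= dpar n w + \sum_(0 <= t < 2 ^ n) (0 < freq n w t))%N.
  rewrite -{1}Hsumf /dpar -big_split /=; apply: leq_sum => t _.
  by case: (freq n w t) => [|k] //=; rewrite subn1 /= addn1.
pose B := [set j : 'I_n | (j < i.-1)%N].
have first : (\sum_(0 <= t < w i) (0 < freq n w t) <= 2 ^ i.-1)%N.
  have -> : (\sum_(0 <= t < w i) (0 < freq n w t) =
             count (fun t => 0 < freq n w t) (iota 0 (w i)))%N.
    rewrite -sum1_count [RHS]big_mkcond /= /index_iota subn0.
    by apply: eq_big => // t _; case: (0 < _)%N.
  rewrite -size_filter.
  apply: (leq_trans (n := size [seq wsum w X | X in powerset B])).
    apply: uniq_leq_size; first by apply: filter_uniq; apply: iota_uniq.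
    move=> t; rewrite mem_filter mem_iota add0n => /andP [Hft /andP [_ Ht]].
    rewrite card_gt0 in Hft; case/set0Pn: Hft => S0; rewrite inE => /eqP HS.
    rewrite -HS; apply: image_f; rewrite inE; apply/subsetP => j Hj.
    rewrite inE ltnNge; apply/negP => Hij.
    have : (w j.+1 <= wsum w S0)%N.
      by rewrite /wsum (bigD1 j) //= leq_addr.
    have : (w i <= w j.+1)%N.
      have -> : j.+1 = (i + (j.+1 - i))%N by rewrite subnKC // -(prednK Hi1).
      apply: mono => //; rewrite subnKC ?ltn_ord //.
      by rewrite -(prednK Hi1).
    move=> h1 h2; have := leq_trans h1 h2; rewrite HS leqNgt Ht //.
  rewrite size_image card_powerset leq_exp2l //.
  have Hle : (i.-1 <= n)%N by rewrite (leq_trans (leq_pred i)).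
  apply: (leq_trans (subset_leq_card (B := [set widen_ord Hle k | k : 'I_(i.-1)]) _)).
    apply/subsetP => j; rewrite inE => Hj; apply/imsetP; exists (Ordinal Hj) => //.
    by apply: val_inj.
  by apply: leq_trans (leq_imset_card _ _) _; rewrite card_ord.
have second : (\sum_(w i <= t < 2 ^ n) (0 < freq n w t) <= 2 ^ n - w i)%N.
  apply: leq_trans (_ : \sum_(w i <= t < 2 ^ n) 1 <= _)%N.
    by apply: leq_sum => t _; case: (0 < _)%N.
  by rewrite sum_nat_const_nat muln1.
rewrite (@big_cat_nat _ _ _ (w i)) //= in key; last exact: ltnW.
have Hnat : (w i <= 2 ^ i.-1 + dpar n w)%N.
  have := leq_add first second; lia.
have H1 : ((w i)%:R <= ((2 ^ i.-1 + dpar n w)%N)%:R :> R)%R by rewrite ler_nat.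
rewrite natrD in H1; apply: (le_trans H1).
by rewrite lerD2l.
Qed.
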